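(* Consider the following network model. Let $q$ be a prime power, $K\ge1$, $L\ge1$, $N_{\mathrm S}\ge K$, $N_{\mathrm R}\ge1$. A source S draws $N_{\mathrm S}$ coefficient vectors i.i.d. uniformly from $\mathbb{F}_q^K$ and broadcasts one packet per vector. Each transmitted packet is erased on the link S$\to$D with probability $\epsilon_{\mathrm{SD}}$ and on the link S$\to\mathrm R_j$ with probability $\epsilon_{\mathrm{SR}_j}$ ($j=1,\dots,L$), all erasures independent across links and packets and independent of the coefficients. Relay $\mathrm R_j$, having received $m_j$ packets with coefficient matrix $\mathbf{C}_{\mathrm S\to\mathrm R_j}\in\mathbb{F}_q^{m_j\times K}$, draws $\mathbf{G}_j\in\mathbb{F}_q^{N_{\mathrm R}\times m_j}$ with i.i.d. uniform entries and transmits the $N_{\mathrm R}$ rows of $\mathbf{G}_j\mathbf{C}_{\mathrm S\to\mathrm R_j}$ to D, each independently erased with probability $\epsilon_{\mathrm R_j\mathrm D}$. D stacks all coefficient vectors it received into $\mathbf{C}_{\mathrm D}$; decoding succeeds iff $\operatorname{rank}(\mathbf{C}_{\mathrm D})=K$, and $P^{(L)}_{\mathrm R}$ is its probability. Then $$P^{(L)}_{\mathrm R}\le P(N_{\mathrm S},\tilde\epsilon),\qquad \tilde\epsilon=\epsilon_{\mathrm{SD}}\prod_{j=1}^L\epsilon_{\mathrm{SR}_j},$$ where $P(N,\epsilon)=\sum_{k=K}^{N}\binom{N}{k}(1-\epsilon)^k\epsilon^{N-k}\prod_{i=0}^{K-1}\left(1-q^{i-k}\right)$.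
   Context: $P(N,\epsilon)$ is the probability that, of $N$ packets carrying i.i.d. uniform coefficient vectors in $\mathbb{F}_q^K$, each independently erased with probability $\epsilon$, the received ones have rank $K$. *)

(* Defs.v *)
From mathcomp Require Import all_boot all_order all_algebra all_field.
Set Implicit Arguments. Unset Strict Implicit. Unset Printing Implicit Defensive.
Import Order.TTheory GRing.Theory Num.Theory.
Local Open Scope ring_scope.

Definition bern_w (R : numDomainType) (n : nat) (e : R) (m : {ffun 'I_n -> bool}) : R :=
  \prod_(i < n) (if m i then 1 - e else e).

(* Row space (as a square K x K matrix, MathComp's %MS convention) spanned by
   all coefficient vectors received at D:
   - C : the N_S source coefficient vectors (rows), i.i.d. uniform in F^K;
   - sSD i : packet i received on S -> D;
   - sSR j i : packet i received on S -> R_j;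
   - G j : N_R x N_S uniform matrix; only the columns of the packets received by
     R_j are used, i.e. relay j sends the rows of G_j C_{S->R_j} where G_j is
     the restriction of G j to the received columns (marginally i.i.d. uniform);
   - sRD j r : packet r of relay j received at D. *)
Definition recv_space (F : fieldType) (K NS NR L : nat)
  (C : 'M[F]_(NS, K)) (sSD : {ffun 'I_NS -> bool})
  (sSR : {ffun 'I_L -> {ffun 'I_NS -> bool}})
  (G : {ffun 'I_L -> 'M[F]_(NR, NS)})
  (sRD : {ffun 'I_L -> {ffun 'I_NR -> bool}}) : 'M[F]_K :=
  (\sum_(i < NS | sSD i) <<row i C>>
   + \sum_(j < L) \sum_(r < NR | sRD j r)
        <<row r (G j *m (diag_mx (\row_i (if sSR j i then 1 else 0)) *m C))>>)%MS.

Definition PR (R : numFieldType) (F : finFieldType) (K NS NR L : nat)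
  (eSD : R) (eSR eRD : 'I_L -> R) : R :=
  \sum_(C : 'M[F]_(NS, K)) \sum_(sSD : {ffun 'I_NS -> bool})
  \sum_(sSR : {ffun 'I_L -> {ffun 'I_NS -> bool}})
  \sum_(G : {ffun 'I_L -> 'M[F]_(NR, NS)})
  \sum_(sRD : {ffun 'I_L -> {ffun 'I_NR -> bool}})
    ((#|{: 'M[F]_(NS, K)}|%:R)^-1 * bern_w eSD sSD
     * (\prod_(j < L) bern_w (eSR j) (sSR j))
     * (#|{: {ffun 'I_L -> 'M[F]_(NR, NS)}}|%:R)^-1
     * (\prod_(j < L) bern_w (eRD j) (sRD j))
     * (\rank (recv_space C sSD sSR G sRD) == K)%:R).

Definition Pfull (R : numFieldType) (q K N : nat) (eps : R) : R :=
  \sum_(K <= k < N.+1) ('C(N, k)%:R * (1 - eps) ^+ k * eps ^+ (N - k)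
     * \prod_(i < K) (1 - (q%:R ^- (k - i)%N))).

(* Main.v *)
Require Import Defs.
From mathcomp Require Import all_boot all_order all_algebra all_field.
From mathcomp Require Import mxabelem ring zify.
Import Order.TTheory GRing.Theory Num.Theory.
Local Open Scope ring_scope.
Set Implicit Arguments. Unset Strict Implicit. Unset Printing Implicit Defensive.

Section Count.
Variable F : finFieldType.

Lemma ker_card n (P : 'M[F]_n) :
  #|[pred v : 'rV[F]_n | v *m P == 0]| = (#|F| ^ (n - \rank P))%N.
Proof.
rewrite -mxrank_ker -card_rowg; apply: eq_card => v.
by rewrite !inE; apply/eqP/sub_kermxP.
Qed.

Lemma fiber_card n (P : 'M[F]_n) m (W : 'M[F]_(m, n)) : (W <= P)%MS ->
  #|[pred v : 'rV[F]_n | (v *m P <= W)%MS]|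
   = muln #|[pred v : 'rV[F]_n | v *m P == 0]| (#|F| ^ \rank W).
Proof.
move=> sWP; rewrite -card_rowg mulnC -sum_nat_const -[LHS]sum1_card.
rewrite (partition_big (fun v => v *m P) (mem (rowg W))) /=; last first.
  by move=> v; rewrite !inE.
apply: eq_bigr => w; rewrite inE => swW.
have /submxP[x Dw] : (w <= P)%MS by apply: submx_trans sWP.
rewrite -sum1_card (reindex (fun u => u + x)) /=; last first.
  by exists (fun v => v - x) => u _; rewrite ?addrK ?subrK.
apply: eq_bigl => u; rewrite !inE mulmxDl -Dw.
rewrite -{3}[w]add0r (can_eq (addrK w)).
by case: eqP => [->|]; rewrite ?add0r ?swW ?andbF.
Qed.

Lemma rank_adds_row n m (a : 'rV[F]_n) (B : 'M[F]_(m, n)) :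
  (\rank (col_mx a B) == m.+1) = (\rank B == m) && ~~ (a <= B)%MS.
Proof.
rewrite -addsmxE addsmxC.
have [sab|nsab] := boolP (a <= B)%MS.
  rewrite andbF (addsmx_idPl sab).
  by rewrite eqn_leq [(m.+1 <= _)%N]leqNgt ltnS rank_leq_row andbF.
have lt : (\rank B < \rank (B + a))%N.
  apply: rank_ltmx; rewrite ltmxE addsmxSl /=.
  by apply: contra nsab; apply: submx_trans (addsmxSr _ _).
have le : (\rank (B + a) <= (\rank B).+1)%N.
  apply: leq_trans (mxrank_adds_leqif _ _) _.
  by rewrite -[X in (_ <= X)%N]addn1 leq_add2l rank_leq_row.
have -> : \rank (B + a)%MS = (\rank B).+1 by apply/eqP; rewrite eqn_leq le lt.
by rewrite eqSS andbT.
Qed.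

Lemma count_rank n (P : 'M[F]_n) m :
  #|[pred A : 'M[F]_(m, n) | \rank (A *m P) == m]|
  = (\prod_(j < m) (#|F| ^ n - #|F| ^ (n - \rank P + j)))%N.
Proof.
elim: m => [|m IHm].
  rewrite big_ord0 (@eq_card _ _ predT) ?card_mx ?mul0n //= => A.
  by rewrite inE; move: (rank_leq_row (A *m P)); rewrite leqn0.
rewrite big_ord_recr /= -IHm -sum_nat_const -[LHS]sum1_card.
rewrite (partition_big (@dsubmx F 1 m n) [pred B : 'M_(m,n) | \rank (B *m P) == m]) /=; last first.
  move=> A; rewrite !inE.
  have -> : A *m P = col_mx (usubmx A *m P) (dsubmx A *m P).
    by rewrite -mul_col_mx vsubmxK.
  by rewrite rank_adds_row => /andP[].
apply: eq_bigr => B rB.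
rewrite (reindex (col_mx^~ B)) /=; last first.
  exists usubmx => [v _ | A]; first by rewrite col_mxKu.
  by rewrite inE => /andP[_ /eqP <-]; rewrite vsubmxK.
rewrite sum1_card.
rewrite (@eq_card _ _ [predC [pred v : 'rV[F]_n | (v *m P <= B *m P)%MS]]); last first.
  move=> v; rewrite [v \in _]unfold_in /= !inE.
  set M := (X in \rank X).
  have -> : M = col_mx (v *m P) (B *m P) := @mul_col_mx _ 1 m n n v B P.
  by rewrite rank_adds_row col_mxKd eqxx andbT rB.
rewrite -[#|[predC _]|](addKn #|[pred v : 'rV[F]_n | (v *m P <= B *m P)%MS]|) cardC.
rewrite fiber_card ?submxMl // ker_card (eqP rB) -expnD.
by rewrite card_mx mul1n.
Qed.
End Count.

Definition Dm (F : fieldType) n (t : {ffun 'I_n -> bool}) : 'M[F]_n :=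
  diag_mx (\row_i (if t i then 1 else 0)).
Arguments Dm {F n}.

Section DmS.
Variable F : fieldType.

Lemma row_Dm n m (t : {ffun 'I_n -> bool}) (C : 'M[F]_(n, m)) i :
  row i (Dm t *m C) = if t i then row i C else 0.
Proof.
rewrite /Dm mul_diag_mx; apply/rowP => j; rewrite !mxE.
by case: (t i); rewrite ?mxE ?mul1r ?mul0r.
Qed.

Lemma rank_Dm n (t : {ffun 'I_n -> bool}) :
  \rank (Dm t : 'M[F]_n) = #|[set i | t i]|.
Proof.
have E : (Dm t :=: \sum_(i | t i) <<delta_mx 0 i : 'rV[F]_n>>)%MS.
  apply/eqmxP; apply/andP; split.
    apply/row_subP => i; rewrite /Dm row_diag_mx mxE.
    case: ifP => ti; last by rewrite scale0r sub0mx.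
    by rewrite scale1r (sumsmx_sup i) ?genmxE.
  apply/sumsmx_subP => i ti; rewrite genmxE.
  by apply: (eq_row_sub i); rewrite /Dm row_diag_mx mxE ti scale1r.
rewrite E.
have /mxdirectP -> /= := @mxdirect_delta F _ (fun i => t i) n id (in2W (@inj_id _)).
rewrite -sum1_card; apply: eq_big => [i|i _]; rewrite ?inE //.
by rewrite mxrank_gen mxrank_delta.
Qed.

End DmS.

Lemma prob_rank (R : numFieldType) (F : finFieldType) n K (t : {ffun 'I_n -> bool}) :
  (#|{: 'M[F]_(n, K)}|%:R)^-1 *
    \sum_(C : 'M[F]_(n, K)) ((\rank (Dm t *m C) == K)%:R : R)
  = \prod_(j < K) (1 - (#|F|%:R ^- (#|[set i | t i]| - j)%N)).
Proof.
set k := #|[set i | t i]|.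
have kn : (k <= n)%N by rewrite -[n]card_ord max_card.
have q0 : (0 < #|F|)%N by apply/card_gt0P; exists 0.
have Q0 : (#|F|%:R : R) != 0 by rewrite pnatr_eq0 -lt0n.
have -> : \sum_(C : 'M[F]_(n, K)) ((\rank (Dm t *m C) == K)%:R : R)
    = (#|[pred A : 'M[F]_(K, n) | \rank (A *m Dm t) == K]|)%:R.
  rewrite -sum1_card natr_sum [RHS]big_mkcond /=.
  rewrite (reindex (@trmx _ K n)) /=; last first.
    by exists (@trmx _ n K) => A _; rewrite trmxK.
  apply: eq_bigr => A _; rewrite inE -mxrank_tr trmx_mul trmxK /Dm tr_diag_mx.
  by case: eqP.
rewrite count_rank rank_Dm -/k card_mx natr_prod.
have -> : ((#|F| ^ (n * K))%:R : R) = \prod_(j < K) (#|F| ^ n)%:R.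
  by rewrite prodr_const card_ord -natrX -expnM.
rewrite -prodfV -big_split /=; apply: eq_bigr => j _.
case: (ltnP j k) => jk.
  rewrite natrB ?leq_pexp2l //; last by lia.
  rewrite !natrX.
  have -> : (#|F|%:R : R) ^+ n = #|F|%:R ^+ (n - k + j) * #|F|%:R ^+ (k - j).
    by rewrite -exprD; congr (_ ^+ _); lia.
  by field; rewrite !expf_neq0.
have -> : (k - j = 0)%N by lia.
rewrite expr0 invr1 subrr.
have -> : (#|F| ^ n - #|F| ^ (n - k + j) = 0)%N.
  by apply/eqP; rewrite subn_eq0 leq_pexp2l //; lia.
by rewrite mulr0.
Qed.

Lemma fiber_sum (R : comRingType) (X : finType) n (p : 'I_n -> X -> R)
  (pi : 'I_n -> X -> bool) (g : {ffun 'I_n -> bool} -> R) :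
  \sum_(x : {ffun 'I_n -> X}) (\prod_i p i (x i)) * g [ffun i => pi i (x i)]
  = \sum_(t : {ffun 'I_n -> bool}) (\prod_i \sum_(y | pi i y == t i) p i y) * g t.
Proof.
rewrite (partition_big (fun x : {ffun 'I_n -> X} => [ffun i => pi i (x i)]) xpredT) //=.
apply: eq_bigr => t _.
rewrite bigA_distr_big_dep big_distrl /=.
apply: eq_big => x.
  apply/eqP/familyP => [<- i|H]; first by rewrite unfold_in ffunE.
  by apply/ffunP => i; rewrite ffunE; have := H i; rewrite unfold_in => /eqP.
by move/eqP => ->.
Qed.

Lemma bern_sum1 (R : numDomainType) n (e : R) :
  \sum_(m : {ffun 'I_n -> bool}) bern_w e m = 1.
Proof.
rewrite /bern_w -(bigA_distr_bigA (fun (i : 'I_n) (b : bool) => if b then 1 - e else e)) /=.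
apply: big1 => i _.
by rewrite big_bool /= subrK.
Qed.

Lemma bern_ge0 (R : numDomainType) n (e : R) (m : {ffun 'I_n -> bool}) :
  0 <= e <= 1 -> 0 <= bern_w e m.
Proof.
case/andP => e0 e1; apply: prodr_ge0 => i _.
by case: (m i); rewrite ?subr_ge0.
Qed.
Lemma per_packet (R : numFieldType) L (eSD : R) (eSR : 'I_L -> R) (tb : bool) :
  \sum_(b : bool) (if b then 1 - eSD else eSD) *
     \sum_(y : {ffun 'I_L -> bool} | (b || [exists j, y j]) == tb)
        \prod_(j < L) (if y j then 1 - eSR j else eSR j)
  = if tb then 1 - eSD * \prod_(j < L) eSR j else eSD * \prod_(j < L) eSR j.
Proof.
set P2 := fun y : {ffun 'I_L -> bool} => \prod_(j < L) (if y j then 1 - eSR j else eSR j).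
have Sall : \sum_(y : {ffun 'I_L -> bool}) P2 y = 1.
  rewrite /P2 -(bigA_distr_bigA (fun (j : 'I_L) (b : bool) => if b then 1 - eSR j else eSR j)) /=.
  by apply: big1 => i _; rewrite big_bool /= subrK.
have Sf : \sum_(y : {ffun 'I_L -> bool} | ~~ [exists j, y j]) P2 y = \prod_(j < L) eSR j.
  rewrite (big_pred1 [ffun => false]) => [|y]; first by apply: eq_bigr => j _; rewrite ffunE.
  rewrite /= negb_exists; apply/forallP/eqP => [H|-> j]; last by rewrite ffunE.
  by apply/ffunP => j; rewrite ffunE; apply/negbTE.
have St : \sum_(y : {ffun 'I_L -> bool} | [exists j, y j]) P2 y = 1 - \prod_(j < L) eSR j.
  have := Sall; rewrite (bigID (fun y : {ffun 'I_L -> bool} => [exists j, y j])) /= Sf => H.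
  by apply: (addIr (\prod_(j < L) eSR j)); rewrite H subrK.
rewrite big_bool /=; case: tb.
  rewrite (eq_bigl xpredT) // Sall (eq_bigl (fun y : {ffun 'I_L -> bool} => [exists j, y j])) ?St; first by ring.
  by move=> y /=; rewrite eqb_id.
rewrite big_pred0 // (eq_bigl (fun y : {ffun 'I_L -> bool} => ~~ [exists j, y j])) ?Sf; first by ring.
by move=> y /=; rewrite eqbF_neg.
Qed.

Definition sor NS L (sSD : {ffun 'I_NS -> bool})
  (sSR : {ffun 'I_L -> {ffun 'I_NS -> bool}}) : {ffun 'I_NS -> bool} :=
  [ffun i => sSD i || [exists j, sSR j i]].

Lemma combine (R : numFieldType) NS L (eSD : R) (eSR : 'I_L -> R)
  (g : {ffun 'I_NS -> bool} -> R) :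
  \sum_(sSD : {ffun 'I_NS -> bool}) \sum_(sSR : {ffun 'I_L -> {ffun 'I_NS -> bool}})
    bern_w eSD sSD * ((\prod_(j < L) bern_w (eSR j) (sSR j)) * g (sor sSD sSR))
  = \sum_(t : {ffun 'I_NS -> bool}) bern_w (eSD * \prod_(j < L) eSR j) t * g t.
Proof.
transitivity (\sum_(sSD : {ffun 'I_NS -> bool}) bern_w eSD sSD *
  \sum_(t : {ffun 'I_NS -> bool})
    (\prod_i \sum_(y : {ffun 'I_L -> bool} | (sSD i || [exists j, y j]) == t i)
        \prod_(j < L) (if y j then 1 - eSR j else eSR j)) * g t).
  apply: eq_bigr => sSD _; rewrite -big_distrr /=; congr (_ * _).
  rewrite (reindex (fun y : {ffun 'I_NS -> {ffun 'I_L -> bool}} =>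
                      [ffun j => [ffun i => y i j]])) /=; last first.
    exists (fun s : {ffun 'I_L -> {ffun 'I_NS -> bool}} => [ffun i => [ffun j => s j i]])
      => s _; apply/ffunP => a; rewrite ffunE; apply/ffunP => b; rewrite !ffunE //.
  rewrite -(fiber_sum (fun i (y : {ffun 'I_L -> bool}) =>
        \prod_(j < L) (if y j then 1 - eSR j else eSR j))
        (fun i y => sSD i || [exists j, y j])).
  apply: eq_bigr => y _; congr (_ * _).
    rewrite /bern_w exchange_big; apply: eq_bigr => j _; apply: eq_bigr => i _.
    by rewrite !ffunE.
  congr g; apply/ffunP => i; rewrite !ffunE; congr (_ || _).
  by apply: eq_existsb => j; rewrite !ffunE.
under eq_bigr do rewrite big_distrr.
rewrite exchange_big; apply: eq_bigr => t _ /=.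
under eq_bigr do rewrite mulrA.
rewrite -big_distrl /=; congr (_ * _).
rewrite /bern_w; under eq_bigr do rewrite -big_split /=.
rewrite -(bigA_distr_bigA (fun i (b : bool) => (if b then 1 - eSD else eSD) *
    \sum_(y : {ffun 'I_L -> bool} | (b || [exists j, y j]) == t i)
        \prod_(j < L) (if y j then 1 - eSR j else eSR j))) /=.
apply: eq_bigr => i _.
exact: per_packet.
Qed.

Lemma card_set_lt N (S : {set 'I_N}) : (#|S| < N.+1)%N.
Proof. by rewrite ltnS; apply: leq_trans (max_card _) _; rewrite card_ord. Qed.

Lemma bern_set (R : numDomainType) N (e : R) (S : {set 'I_N}) :
  bern_w e [ffun i => i \in S] = (1 - e) ^+ #|S| * e ^+ (N - #|S|).
Proof.
rewrite /bern_w (bigID (fun i => i \in S)) /=.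
rewrite (eq_bigr (fun _ => 1 - e)); last by move=> i iS; rewrite ffunE iS.
rewrite (eq_bigr (fun _ => e)); last by move=> i iS; rewrite ffunE (negbTE iS).
rewrite [X in _ * X](eq_bigl (fun i => i \in ~: S)); last by move=> i; rewrite inE.
by rewrite !prodr_const cardsCs setCK card_ord.
Qed.

Lemma binom_sum (R : numFieldType) (q K N : nat) (e : R) : (K <= N)%N ->
  \sum_(t : {ffun 'I_N -> bool}) bern_w e t *
     \prod_(i < K) (1 - (q%:R ^- (#|[set i | t i]| - i)%N))
  = Pfull q K N e.
Proof.
move=> KN.
rewrite (reindex (fun S : {set 'I_N} => [ffun i => i \in S])) /=; last first.
  exists (fun t => [set i | t i]) => [S _|t _].
    by apply/setP => i; rewrite inE ffunE.
  by apply/ffunP => i; rewrite ffunE inE.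
rewrite (partition_big (fun S : {set 'I_N} => (inord #|S| : 'I_N.+1)) xpredT) //=.
rewrite /Pfull.
set f := fun k : nat => 'C(N, k)%:R * (1 - e) ^+ k * e ^+ (N - k)
     * \prod_(i < K) (1 - (q%:R ^- (k - i)%N)).
have -> : \sum_(K <= k < N.+1) f k = \sum_(k < N.+1) f k.
  rewrite -(big_mkord xpredT f) (@big_cat_nat _ _ _ K 0 N.+1) /= ?ltnS ?(leqW KN) //.
  rewrite [X in _ = X + _]big1_seq ?add0r //.
  move=> k /andP[_]; rewrite mem_index_iota /= => kK.
  rewrite /f (bigD1 (Ordinal kK)) //= subnn expr0 invr1 subrr.
  by rewrite !mul0r mulr0.
apply: eq_bigr => k _.
transitivity (\sum_(S : {set 'I_N} | #|S| == k)
   ((1 - e) ^+ k * e ^+ (N - k) * \prod_(i < K) (1 - q%:R ^- (k - i)))).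
  apply: eq_big => S.
    have lt : (#|S| < N.+1)%N by rewrite card_set_lt.
    apply/eqP/eqP => [<-|E]; first by rewrite inordK.
    by apply: val_inj; rewrite /= inordK.
  move=> /eqP <-; rewrite bern_set inordK; last first.
    by rewrite card_set_lt.
  have -> : #|[set i1 | [ffun i2 => i2 \in S] i1]| = #|S|.
    by apply: eq_card => i; rewrite inE ffunE.
  by [].
rewrite sumr_const.
have -> : #|[pred S : {set 'I_N} | #|S| == k]| = 'C(N, k).
  by rewrite -[N in 'C(N, _)]card_ord -card_draws cardsE.
by rewrite /f -!mulrA mulr_natl.
Qed.

Lemma recv_sub (F : fieldType) (K NS NR L : nat)
  (C : 'M[F]_(NS, K)) (sSD : {ffun 'I_NS -> bool})
  (sSR : {ffun 'I_L -> {ffun 'I_NS -> bool}})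
  (G : {ffun 'I_L -> 'M[F]_(NR, NS)})
  (sRD : {ffun 'I_L -> {ffun 'I_NR -> bool}}) :
  (recv_space C sSD sSR G sRD <= Dm (sor sSD sSR) *m C)%MS.
Proof.
rewrite /recv_space addsmx_sub; apply/andP; split.
  apply/sumsmx_subP => i si; rewrite genmxE; apply: (eq_row_sub i).
  by rewrite row_Dm ffunE si.
apply/sumsmx_subP => j _; apply/sumsmx_subP => r _; rewrite genmxE.
apply: submx_trans (row_sub r _) _; apply: mulmx_sub.
change (Dm (sSR j) *m C <= Dm (sor sSD sSR) *m C)%MS.
apply/row_subP => i; rewrite row_Dm; case: ifP => sji; last by rewrite sub0mx.
apply: (eq_row_sub i); rewrite row_Dm.
have -> : sor sSD sSR i = true.
  by rewrite ffunE; apply/orP; right; apply/existsP; exists j.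
by [].
Qed.

Lemma bern_prod_sum1 (R : numDomainType) L n (e : 'I_L -> R) :
  \sum_(s : {ffun 'I_L -> {ffun 'I_n -> bool}}) \prod_(j < L) bern_w (e j) (s j) = 1.
Proof.
rewrite -(bigA_distr_bigA (fun j (m : {ffun 'I_n -> bool}) => bern_w (e j) m)) /=.
by apply: big1 => j _; rewrite bern_sum1.
Qed.

Theorem proposition2 (R : realFieldType) (F : finFieldType) (K L NS NR : nat)
  (eSD : R) (eSR eRD : 'I_L -> R) :
  (1 <= K)%N -> (1 <= L)%N -> (K <= NS)%N -> (1 <= NR)%N ->
  0 <= eSD <= 1 ->
  (forall j, 0 <= eSR j <= 1) ->
  (forall j, 0 <= eRD j <= 1) ->
  PR F K NS NR eSD eSR eRD
    <= Pfull #|F| K NS (eSD * \prod_(j < L) eSR j).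
Proof.
move=> K1 L1 KNS NR1 eSD01 eSR01 eRD01.
set u := (#|{: 'M[F]_(NS, K)}|%:R : R)^-1.
set v := (#|{: {ffun 'I_L -> 'M[F]_(NR, NS)}}|%:R : R)^-1.
pose ind2 (C : 'M[F]_(NS, K)) (t : {ffun 'I_NS -> bool}) : R :=
  (\rank (Dm t *m C) == K)%:R.
have u0 : 0 <= u by rewrite invr_ge0 ler0n.
have v0 : 0 <= v by rewrite invr_ge0 ler0n.
apply: (@le_trans _ _ (\sum_(C : 'M[F]_(NS, K)) \sum_(sSD : {ffun 'I_NS -> bool})
  \sum_(sSR : {ffun 'I_L -> {ffun 'I_NS -> bool}})
  \sum_(G : {ffun 'I_L -> 'M[F]_(NR, NS)})
  \sum_(sRD : {ffun 'I_L -> {ffun 'I_NR -> bool}})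
    (u * bern_w eSD sSD * (\prod_(j < L) bern_w (eSR j) (sSR j)) * v
     * (\prod_(j < L) bern_w (eRD j) (sRD j)) * ind2 C (sor sSD sSR)))).
  rewrite /PR -/u -/v.
  apply: ler_sum => C _; apply: ler_sum => sSD _; apply: ler_sum => sSR _.
  apply: ler_sum => G _; apply: ler_sum => sRD _.
  apply: ler_wpM2l.
    rewrite !mulr_ge0 ?bern_ge0 //; apply: prodr_ge0 => j _; exact: bern_ge0.
  rewrite /ind2; case: eqP => [rK|]; last by rewrite ler0n.
  suff -> : \rank (Dm (sor sSD sSR) *m C) == K by [].
  rewrite eqn_leq rank_leq_col /= -{1}rK; apply: mxrankS; exact: recv_sub.
rewrite le_eqVlt; apply/orP; left; apply/eqP.
have Gsum : \sum_(G : {ffun 'I_L -> 'M[F]_(NR, NS)}) v = 1.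
  rewrite sumr_const -mulr_natr mulVf // pnatr_eq0 -lt0n.
  by apply/card_gt0P; exists [ffun => 0].
transitivity (\sum_(C : 'M[F]_(NS, K)) \sum_(sSD : {ffun 'I_NS -> bool})
  \sum_(sSR : {ffun 'I_L -> {ffun 'I_NS -> bool}})
    u * (bern_w eSD sSD * ((\prod_(j < L) bern_w (eSR j) (sSR j)) * ind2 C (sor sSD sSR)))).
  apply: eq_bigr => C _; apply: eq_bigr => sSD _; apply: eq_bigr => sSR _.
  transitivity (\sum_(G : {ffun 'I_L -> 'M[F]_(NR, NS)})
     \sum_(sRD : {ffun 'I_L -> {ffun 'I_NR -> bool}})
     (u * (bern_w eSD sSD * ((\prod_(j < L) bern_w (eSR j) (sSR j)) * ind2 C (sor sSD sSR))))
       * (v * \prod_(j < L) bern_w (eRD j) (sRD j))).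
    by apply: eq_bigr => G _; apply: eq_bigr => sRD _; ring.
  under eq_bigr do rewrite -big_distrr /=.
  rewrite -big_distrr /=.
  rewrite [X in _ * X](eq_bigr (fun _ => v)) ?Gsum ?mulr1 // => G _.
  by rewrite -big_distrr /= bern_prod_sum1 mulr1.
transitivity (\sum_(C : 'M[F]_(NS, K)) u *
   \sum_(t : {ffun 'I_NS -> bool}) bern_w (eSD * \prod_(j < L) eSR j) t * ind2 C t).
  apply: eq_bigr => C _.
  rewrite -(combine eSD eSR (ind2 C)) big_distrr; apply: eq_bigr => sSD _.
  by rewrite big_distrr.
transitivity (\sum_(t : {ffun 'I_NS -> bool}) bern_w (eSD * \prod_(j < L) eSR j) t *
   \prod_(i < K) (1 - (#|F|%:R ^- (#|[set i | t i]| - i)%N))).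
  under eq_bigr do rewrite big_distrr /=.
  rewrite exchange_big /=.
  rewrite (eq_bigr (fun t => bern_w (eSD * \prod_(j < L) eSR j) t *
     \prod_(i < K) (1 - (#|F|%:R ^- (#|[set i | t i]| - i)%N)))) // => t _.
  rewrite -prob_rank !big_distrr /=.
  by under eq_bigr do rewrite mulrCA.
by rewrite binom_sum.
Qed.
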